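(* Assume $p_0\in(0,1)$, $p_j\in(0,1)$ and $\tau_j=\frac{p_0}{p_0+2(1-p_0)p_j}$ for $j=1,\dots,k$. Then for every $\Theta\in\mathbb R^{nd}$, $$\mathbb E_\xi\|G(\Theta)-G(\hat\Theta)\|^2\le 2\mathcal L\,\big(F(\Theta)-F(\hat\Theta)\big),$$ where both oracles use the same realization of $\xi$.
   Context: Clients $1,\dots,n$ are partitioned into nonempty disjoint clusters $\mathcal I_1,\dots,\mathcal I_k$; $d\ge1$. Each $f_i:\mathbb R^d\to\mathbb R$ is differentiable, $\mu$-strongly convex and $L$-smooth ($0<\mu\le L$). Fix $\gamma_i>0$ and $\alpha_j\in[0,1]$, not all $\alpha_j=0$. For $\Theta=(\theta_1,\dots,\theta_n)$ define $\bar\theta_j=\frac{\sum_{i\in\mathcal I_j}\gamma_i\theta_i}{\sum_{i\in\mathcal I_j}\gamma_i}$, $\bar\theta=\frac{\sum_{j}\sum_{i\in\mathcal I_j}\alpha_j\gamma_i\theta_i}{\sum_{j}\sum_{i\in\mathcal I_j}\alpha_j\gamma_i}$ and $F(\Theta)=\sum_{j}\sum_{i\in\mathcal I_j}\big(f_i(\theta_i)+\frac{(1-\alpha_j)\gamma_i}{2}\|\theta_i-\bar\theta_j\|^2+\frac{\alpha_j\gamma_i}{2}\|\theta_i-\bar\theta\|^2\big)$; $\hat\Theta$ is its unique minimizer. Gradient oracle: $\xi=(\xi_0,\dots,\xi_k)$ independent Bernoulli with $\mathbb P(\xi_j=1)=p_j$; $G(\Theta)=(G_1,\dots,G_n)$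 with, for $i\in\mathcal I_j$: $G_i=\frac{\gamma_i\alpha_j}{p_0}(\theta_i-\bar\theta)+\frac{\gamma_i\tau_j(1-\alpha_j)}{p_0}(\theta_i-\bar\theta_j)$ if $\xi_0=1$; $G_i=\frac{\gamma_i(1-\tau_j)(1-\alpha_j)}{(1-p_0)p_j}(\theta_i-\bar\theta_j)$ if $\xi_0=0,\xi_j=1$; $G_i=\frac{1}{(1-p_0)(1-p_j)}\nabla f_i(\theta_i)$ if $\xi_0=\xi_j=0$. Define $$\mathcal L=\max\Big\{\frac{2}{p_0}\max_{j}\max_{i\in\mathcal I_j}\alpha_j\gamma_i,\ \max_{j}\frac{2(1-\alpha_j)\max_{i\in\mathcal I_j}\gamma_i}{p_0+2(1-p_0)p_j},\ \frac{L}{1-p_0}\max_{j}\frac{1}{1-p_j}\Big\}.$$ *)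

(* Defs.v *)
From HB Require Import structures.
From mathcomp Require Import all_boot all_order all_algebra.
From mathcomp Require Import all_classical all_reals all_analysis.
Set Implicit Arguments. Unset Strict Implicit. Unset Printing Implicit Defensive.
Import Order.TTheory GRing.Theory Num.Theory.
Import numFieldNormedType.Exports.
Local Open Scope ring_scope.

Section Defs.
Variables (R : realType) (d : nat).

Definition sqnorm (v : 'rV[R]_d) : R := \sum_(j < d) (v 0 j) ^+ 2.
Definition enorm (v : 'rV[R]_d) : R := Num.sqrt (sqnorm v).

Definition grad (f : 'rV[R]_d -> R) (x : 'rV[R]_d) : 'rV[R]_d :=
  \row_(j < d) ('d f x (delta_mx 0 j : 'rV[R]_d)).

Definition strongly_convex (mu : R) (f : 'rV[R]_d -> R) : Prop :=
  forall (x y : 'rV[R]_d) (t : R), 0 <= t <= 1 ->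
    f (t *: x + (1 - t) *: y) <=
      t * f x + (1 - t) * f y - mu / 2 * t * (1 - t) * sqnorm (x - y).

Definition smooth (L : R) (f : 'rV[R]_d -> R) : Prop :=
  (forall x, differentiable f x) /\
  (forall x y, enorm (grad f x - grad f y) <= L * enorm (x - y)).

Variables (n k : nat) (c : 'I_n -> 'I_k) (gamma : 'I_n -> R) (alpha : 'I_k -> R).

Definition cluster_mean (Th : 'I_n -> 'rV[R]_d) (j : 'I_k) : 'rV[R]_d :=
  (\sum_(i < n | c i == j) gamma i)^-1 *: \sum_(i < n | c i == j) gamma i *: Th i.

Definition global_mean (Th : 'I_n -> 'rV[R]_d) : 'rV[R]_d :=
  (\sum_(i < n) alpha (c i) * gamma i)^-1 *:
    \sum_(i < n) (alpha (c i) * gamma i) *: Th i.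

Definition objF (f : 'I_n -> 'rV[R]_d -> R) (Th : 'I_n -> 'rV[R]_d) : R :=
  \sum_(i < n) (f i (Th i)
     + (1 - alpha (c i)) * gamma i / 2 * sqnorm (Th i - cluster_mean Th (c i))
     + alpha (c i) * gamma i / 2 * sqnorm (Th i - global_mean Th)).

Variables (p0 : R) (p tau : 'I_k -> R).

Definition oracle (f : 'I_n -> 'rV[R]_d -> R) (xi0 : bool) (xis : {ffun 'I_k -> bool})
    (Th : 'I_n -> 'rV[R]_d) (i : 'I_n) : 'rV[R]_d :=
  let j := c i in
  if xi0 then
    (gamma i * alpha j / p0) *: (Th i - global_mean Th)
    + (gamma i * tau j * (1 - alpha j) / p0) *: (Th i - cluster_mean Th j)
  else if xis j then
    (gamma i * (1 - tau j) * (1 - alpha j) / ((1 - p0) * p j)) *: (Th i - cluster_mean Th j)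
  else
    ((1 - p0) * (1 - p j))^-1 *: grad (f i) (Th i).

Definition xi_prob (xi0 : bool) (xis : {ffun 'I_k -> bool}) : R :=
  (if xi0 then p0 else 1 - p0) * \prod_(j < k) (if xis j then p j else 1 - p j).

Definition expected_sqdiff (f : 'I_n -> 'rV[R]_d -> R) (Th Th' : 'I_n -> 'rV[R]_d) : R :=
  \sum_(xi0 : bool) \sum_(xis : {ffun 'I_k -> bool})
    xi_prob xi0 xis *
      \sum_(i < n) sqnorm (oracle f xi0 xis Th i - oracle f xi0 xis Th' i).

Definition calL (L : R) : R :=
  Num.max (Num.max
    (2 / p0 * \big[Num.max/0]_(i < n) (alpha (c i) * gamma i))
    (\big[Num.max/0]_(j < k)
        (2 * (1 - alpha j) * \big[Num.max/0]_(i < n | c i == j) gamma i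
          / (p0 + 2 * (1 - p0) * p j))))
    (L / (1 - p0) * \big[Num.max/0]_(j < k) (1 - p j)^-1).

End Defs.

(* Main.v *)
Require Import Defs.
From HB Require Import structures.
From mathcomp Require Import all_boot all_order all_algebra.
From mathcomp Require Import all_classical all_reals all_analysis.
Import Order.TTheory GRing.Theory Num.Theory.
Import numFieldNormedType.Exports.
From mathcomp Require Import ring lra.
Local Open Scope ring_scope.


Section An.
Variables (R : realType) (d : nat).
Implicit Types (f : 'rV[R]_d -> R) (a b c g x y v : 'rV[R]_d).

Definition dot (a b : 'rV[R]_d) : R := \sum_(j < d) a 0 j * b 0 j.

Lemma diff_dot f x v : @eq R ('d f x v) (dot (grad f x) v).
Proof.
rewrite {1}(row_sum_delta v) linear_sum; apply: eq_bigr => j _.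
by rewrite linearZ /= mxE mulrC.
Qed.

Lemma line_derive f x v t : differentiable f (t *: v + x) ->
  is_derive t 1 (fun h => f (h *: v + x)) ('d f (t *: v + x) v).
Proof.
move=> df.
have E : (fun h : R => h^-1 *: (((fun h => f (h *: v + x)) \o shift t) (h *: 1)
           - f (t *: v + x))) =
         (fun h => h^-1 *: ((f \o shift (t *: v + x)) (h *: v) - f (t *: v + x))).
  apply/funext => h /=; rewrite /shift /= [h *: 1]mulr1 scalerDl addrA.
  by [].
split; first by rewrite /derivable E; exact: diff_derivable.
transitivity ('D_v f (t *: v + x)); first by rewrite /derive E.
exact: deriveE.
Qed.


Lemma sqnorm_ge0 v : 0 <= sqnorm v.
Proof. by apply: sumr_ge0 => j _; exact: sqr_ge0. Qed.

Lemma dotC a b : dot a b = dot b a.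
Proof. by apply: eq_bigr => j _; rewrite mulrC. Qed.

Lemma dotBl a b c : dot (a - b) c = dot a c - dot b c.
Proof. by rewrite /dot -sumrB; apply: eq_bigr => j _; rewrite !mxE mulrBl. Qed.

Lemma dotZl (s : R) a b : dot (s *: a) b = s * dot a b.
Proof. by rewrite /dot mulr_sumr; apply: eq_bigr => j _; rewrite !mxE mulrA. Qed.

Lemma dotDl a b c : dot (a + b) c = dot a c + dot b c.
Proof. by rewrite /dot -big_split; apply: eq_bigr => j _; rewrite !mxE mulrDl. Qed.

Lemma sqnorm_dot a : sqnorm a = dot a a.
Proof. by apply: eq_bigr => j _; rewrite expr2. Qed.

Lemma sqnormD a b : sqnorm (a + b) = sqnorm a + 2 * dot a b + sqnorm b.
Proof.
rewrite /sqnorm /dot mulr_sumr -!big_split /=.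
by apply: eq_bigr => j _; rewrite !mxE; ring.
Qed.

Lemma sqnormZ (s : R) a : sqnorm (s *: a) = s ^+ 2 * sqnorm a.
Proof. by rewrite /sqnorm mulr_sumr; apply: eq_bigr => j _; rewrite !mxE exprMn. Qed.

Lemma sqnormB a b : sqnorm (a - b) = sqnorm a - 2 * dot a b + sqnorm b.
Proof.
rewrite sqnormD -scaleN1r sqnormZ dotC dotZl dotC; ring.
Qed.

Lemma sqnorm0P a : sqnorm a = 0 -> a = 0.
Proof.
move=> h; apply/rowP => j; rewrite mxE.
have /psumr_eq0P H := h.
have := H (fun i _ => sqr_ge0 (a 0 i)) j isT.
by move/eqP; rewrite sqrf_eq0 => /eqP.
Qed.

Lemma dot0l b : dot 0 b = 0.
Proof. by rewrite /dot big1 // => j _; rewrite mxE mul0r. Qed.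

Lemma dot_le g v K : 0 <= K -> sqnorm g <= K ^+ 2 * sqnorm v -> dot g v <= K * sqnorm v.
Proof.
move=> K0 H.
have [KE|Kp] := eqVneq K 0.
  subst K; have : sqnorm g = 0 by apply/le_anti; rewrite sqnorm_ge0 andbT; move: H; rewrite expr2 !mul0r.
  by move/sqnorm0P => ->; rewrite dot0l mul0r.
have Kp' : 0 < K by rewrite lt_def Kp K0.
have e : dot g (K *: v) = K * dot g v by rewrite dotC dotZl dotC.
have := sqnorm_ge0 (g - K *: v); rewrite sqnormB sqnormZ e => h2.
have : K * dot g v <= K * (K * sqnorm v).
  rewrite mulrA -expr2. lra.
by rewrite ler_pM2l.
Qed.

Lemma enorm_sq a b L : 0 <= L -> enorm a <= L * enorm b -> sqnorm a <= L ^+ 2 * sqnorm b.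
Proof.
move=> L0 h.
have h' : enorm a ^+ 2 <= (L * enorm b) ^+ 2.
  by rewrite ler_sqr ?nnegrE ?mulr_ge0 ?sqrtr_ge0.
by move: h'; rewrite exprMn /enorm !sqr_sqrtr ?sqnorm_ge0.
Qed.


Lemma descent f L x y : 0 <= L -> smooth L f ->
  f y <= f x + 'd f x (y - x) + L / 2 * sqnorm (y - x).
Proof.
move=> L0 [df lip]; set v := y - x.
set A := 'd f x v; set B := L / 2 * sqnorm v.
pose g := fun t : R => f (t *: v + x).
pose H := g - (@idfun R * cst A) - (cst B * (@idfun R * @idfun R)).
pose dH := fun t : R => 'd f (t *: v + x) v - A - B * (t + t).
have hd : forall t : R, is_derive t 1 H (dH t).
  move=> t; apply: is_derive_eq.
    apply: is_deriveB; first apply: is_deriveB.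
    exact: line_derive.
  by rewrite /dH /= !scaler0 !add0r !addr0 /cst /= ![_%:A]mulr1.
have hc : {within `[0, 1], continuous H}%classic.
  apply: derivable_within_continuous => t _; exact: (@ex_derive _ _ _ _ _ _ _ (hd t)).
have [c cin hmvt] := MVT ltr01 (fun t _ => hd t) hc.
have c0 : 0 < c by move: cin; rewrite in_itv => /andP[].
have hdc : dH c <= 0.
  rewrite /dH.
  have -> : 'd f (c *: v + x) v - A = dot (grad f (c *: v + x) - grad f x) v.
    by rewrite (diff_dot f (c *: v + x) v) /A (diff_dot f x v) dotBl.
  have : dot (grad f (c *: v + x) - grad f x) v <= (L * c) * sqnorm v.
    apply: dot_le; first by rewrite mulr_ge0 // ltW.
    have := enorm_sq _ _ _ L0 (lip (c *: v + x) x); rewrite addrK sqnormZ => h.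
    by rewrite exprMn -mulrA.
  rewrite /B; lra.
have : H 1 <= H 0 by rewrite -subr_le0 hmvt subr0 mulr1.
have E1 : H 1 = f (1 *: v + x) - 1 * A - B * (1 * 1) by [].
have E0 : H 0 = f (0 *: v + x) - 0 * A - B * (0 * 0) by [].
rewrite E1 E0 scale1r scale0r add0r /v subrK.
lra.
Qed.


Lemma conv_first f mu x y : 0 <= mu -> strongly_convex mu f ->
  (forall z, differentiable f z) -> f x + 'd f x (y - x) <= f y.
Proof.
move=> mu0 cvx df; set v := y - x.
pose g := fun t : R => f (t *: v + x).
have hd : is_derive (0:R) 1 g ('d f (0 *: v + x) v) by exact: line_derive.
have cv := @ex_derive _ _ _ _ _ _ _ hd.
have dv := @derive_val _ _ _ _ _ _ _ hd.
rewrite scale0r add0r in dv.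
have cvr := cvg_dnbhs_at_right cv.
rewrite /derive in dv; rewrite dv in cvr.
rewrite -lerBrDl; apply: (cvgr_to_le cvr).
near=> h.
have h0 : 0 < h by near: h; exact: nbhs_right_gt.
have h1 : h <= 1 by near: h; exact: nbhs_right_le.
rewrite /= /shift /g [h *: 1]mulr1 addr0 scale0r add0r.
have hc := cvx y x h; rewrite ltW // h1 /= in hc.
have -> : h *: v + x = h *: y + (1 - h) *: x.
  by rewrite /v scalerBr scalerBl scale1r addrA addrAC addrC addrA.
have pen : 0 <= mu / 2 * h * (1 - h) * sqnorm (y - x).
  by rewrite !mulr_ge0 ?sqnorm_ge0 ?divr_ge0 ?subr_ge0 // ltW.
rewrite /GRing.scale /= mulrC ler_pdivrMr //.
lra.
Unshelve. all: by end_near.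
Qed.


Lemma dotBr a b c : dot a (b - c) = dot a b - dot a c.
Proof. by rewrite dotC dotBl !(dotC a). Qed.

Lemma dotZr (s : R) a b : dot a (s *: b) = s * dot a b.
Proof. by rewrite dotC dotZl dotC. Qed.

Lemma arith_coco (fx fy fz D1 da db G Li : R) :
  fx + (D1 - Li * da) <= fz -> fz <= fy + - Li * db + Li * G / 2 ->
  Li * G = Li * db - Li * da -> Li * G / 2 <= fy - fx - D1.
Proof. lra. Qed.

Lemma cocoercive f mu L x y : 0 <= mu -> 0 < L -> strongly_convex mu f -> smooth L f ->
  sqnorm (grad f y - grad f x) / (2 * L) <= f y - f x - 'd f x (y - x).
Proof.
move=> mu0 L0 cvx sm; have [df _] := sm.
set g := grad f y - grad f x.
set z := y - L^-1 *: g.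
have h1 := conv_first f mu x z mu0 cvx df.
have h2 := descent f L y z (ltW L0) sm.
rewrite (diff_dot f x (z - x)) in h1.
rewrite (diff_dot f y (z - y)) in h2.
rewrite (diff_dot f x (y - x)).
have e1 : z - x = (y - x) - L^-1 *: g by rewrite /z addrAC.
have e2 : z - y = - (L^-1 *: g) by rewrite /z addrC addKr.
rewrite e1 dotBr dotZr in h1.
rewrite e2 -scaleNr dotZr sqnormZ in h2.
have e3 : sqnorm g = dot (grad f y) g - dot (grad f x) g by rewrite sqnorm_dot /g dotBl.
set G := sqnorm g in e3 h2 *.
set Li := L^-1 in h1 h2 e3 *.
have LLi : L * Li = 1 by rewrite /Li divff // gt_eqF.
have e4 : L / 2 * ((- Li) ^+ 2 * G) = Li * G / 2.
  rewrite sqrrN expr2; rewrite -[in RHS](mul1r Li) -LLi; ring.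
have e5 : G / (2 * L) = Li * G / 2.
  rewrite /Li invfM; ring.
have e6 : Li * G = Li * dot (grad f y) g - Li * dot (grad f x) g by rewrite e3 mulrBr.
rewrite e4 in h2; rewrite e5.
exact: arith_coco h1 h2 e6.
Qed.

Lemma sqnormD_le x y : sqnorm (x + y) <= 2 * sqnorm x + 2 * sqnorm y.
Proof.
rewrite sqnormD.
have := sqnorm_ge0 (x - y); rewrite sqnormB => h.
lra.
Qed.

End An.
Arguments dot {R d}.
Arguments diff_dot {R d}.
Arguments line_derive {R d}.
Arguments sqnorm_ge0 {R d}.
Arguments dotC {R d}.
Arguments dotBl {R d}.
Arguments dotZl {R d}.
Arguments dotDl {R d}.
Arguments sqnorm_dot {R d}.
Arguments sqnormD {R d}.
Arguments sqnormZ {R d}.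
Arguments sqnormB {R d}.
Arguments sqnorm0P {R d}.
Arguments dot0l {R d}.
Arguments dot_le {R d}.
Arguments enorm_sq {R d}.
Arguments descent {R d}.
Arguments conv_first {R d}.
Arguments dotBr {R d}.
Arguments dotZr {R d}.
Arguments arith_coco {R}.
Arguments cocoercive {R d}.
Arguments sqnormD_le {R d}.

Section M1.
Variable R : realType.

Lemma marg (k : nat) (w : 'I_k -> bool -> R) (hw : forall j, w j true + w j false = 1)
  (j0 : 'I_k) (h : bool -> R) :
  \sum_(xis : {ffun 'I_k -> bool}) (\prod_(j < k) w j (xis j)) * h (xis j0)
  = w j0 true * h true + w j0 false * h false.
Proof.
have E : forall xis : {ffun 'I_k -> bool}, (\prod_(j < k) w j (xis j)) * h (xis j0)
    = \prod_(j < k) (w j (xis j) * (if j == j0 then h (xis j) else 1)).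
  move=> xis; rewrite big_split /=; congr (_ * _).
  rewrite (bigD1 j0) //= eqxx big1 ?mulr1 //.
  by move=> j /negbTE ->.
rewrite (eq_bigr _ (fun xis _ => E xis)).
rewrite -(bigA_distr_bigA (fun j b => w j b * (if j == j0 then h b else 1))) /=.
rewrite (bigD1 j0) //= big_bool eqxx /= big1 ?mulr1 //.
by move=> j /negbTE jn; rewrite big_bool jn /= !mulr1 hw.
Qed.

Lemma pos_lin (S C : R) : 0 <= C -> (forall t, 0 < t -> 0 <= t * S + t ^+ 2 * C) -> 0 <= S.
Proof.
move=> C0 H; rewrite leNgt; apply/negP => S0.
have C1 : 0 < C + 1 by lra.
set t := - S / (C + 1).
have t0 : 0 < t by rewrite /t divr_gt0 // oppr_gt0.
have := H t t0.
have -> : t * S + t ^+ 2 * C = t * (S / (C + 1)).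
  rewrite /t; field; lra.
rewrite pmulr_rge0 // => h.
have : S / (C + 1) < 0 by rewrite pmulr_llt0 // invr_gt0.
lra.
Qed.

Lemma ineq_c1 (p0 ag M1 cL W : R) : 0 < p0 -> 0 <= ag -> ag <= M1 -> 2 / p0 * M1 <= cL -> 0 <= W ->
  p0 * (2 * (ag / p0) ^+ 2 * W) <= cL * (ag * W).
Proof.
move=> p00 ag0 agM hc W0.
have -> : p0 * (2 * (ag / p0) ^+ 2 * W) = (2 / p0 * ag) * (ag * W).
  field; lra.
apply: ler_wpM2r; first by rewrite mulr_ge0.
apply: le_trans hc; apply: ler_wpM2l => //.
by rewrite divr_ge0 // ltW.
Qed.

Lemma ineq_c2 (p0 pj ga al Mj cL U tau : R) : tau = p0 / (p0 + 2 * (1 - p0) * pj) -> 0 < p0 < 1 -> 0 < pj < 1 -> 0 <= al <= 1 -> 0 < ga ->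
  ga <= Mj -> 2 * (1 - al) * Mj / (p0 + 2 * (1 - p0) * pj) <= cL -> 0 <= U ->
  p0 * (2 * (ga * tau * (1 - al) / p0) ^+ 2 * U)
  + (1 - p0) * (pj * ((ga * (1 - tau) * (1 - al) / ((1 - p0) * pj)) ^+ 2 * U))
  <= cL * ((1 - al) * ga * U).
Proof.
move=> htau /andP[p00 p01] /andP[pj0 pj1] /andP[al0 al1] ga0 gaM hc U0.
have D0 : 0 < p0 + 2 * (1 - p0) * pj.
  have : 0 < (1 - p0) * pj by rewrite mulr_gt0 // subr_gt0.
  lra.
have -> : p0 * (2 * (ga * tau * (1 - al) / p0) ^+ 2 * U)
  + (1 - p0) * (pj * ((ga * (1 - tau) * (1 - al) / ((1 - p0) * pj)) ^+ 2 * U))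
  = (2 * (1 - al) * ga / (p0 + 2 * (1 - p0) * pj)) * ((1 - al) * ga * U).
  rewrite htau; field.
  apply/and3P; split; rewrite ?gt_eqF //; lra.
apply: ler_wpM2r; first by rewrite !mulr_ge0 // ?subr_ge0 // ltW.
apply: le_trans hc; apply: ler_wpM2r; first by rewrite invr_ge0 ltW.
by apply: ler_wpM2l => //; rewrite mulr_ge0 // subr_ge0.
Qed.

Lemma ineq_c3 (p0 pj L Mx cL G : R) : 0 < p0 < 1 -> 0 < pj < 1 -> 0 < L ->
  (1 - pj)^-1 <= Mx -> L / (1 - p0) * Mx <= cL -> 0 <= G ->
  (1 - p0) * ((1 - pj) * (((1 - p0) * (1 - pj))^-1 ^+ 2 * G)) <= cL * (G / L).
Proof.
move=> /andP[p00 p01] /andP[pj0 pj1] L0 hM hc G0.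
have q0 : 0 < 1 - p0 by rewrite subr_gt0.
have q1 : 0 < 1 - pj by rewrite subr_gt0.
have -> : (1 - p0) * ((1 - pj) * (((1 - p0) * (1 - pj))^-1 ^+ 2 * G))
   = (L / (1 - p0) * (1 - pj)^-1) * (G / L).
  field; apply/and3P; split; rewrite ?gt_eqF //.
apply: ler_wpM2r; first by rewrite divr_ge0 // ltW.
apply: le_trans hc; apply: ler_wpM2l => //.
by rewrite divr_ge0 // ltW.
Qed.

Lemma comb_ineq (p0' pj T1 Qt Qf AA BB EE SS cL G U W L' ga al : R) :
  0 < p0' < 1 -> 0 < pj < 1 -> 0 < L' ->
  T1 <= 2 * (AA ^+ 2 * W) + 2 * (BB ^+ 2 * U) ->
  Qt = EE ^+ 2 * U -> Qf = SS ^+ 2 * G ->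
  p0' * (2 * AA ^+ 2 * W) <= cL * (al * ga * W) ->
  p0' * (2 * BB ^+ 2 * U) + (1 - p0') * (pj * (EE ^+ 2 * U)) <= cL * ((1 - al) * ga * U) ->
  (1 - p0') * ((1 - pj) * (SS ^+ 2 * G)) <= cL * (G / L') ->
  p0' * (pj * T1 + (1 - pj) * T1) + (1 - p0') * (pj * Qt + (1 - pj) * Qf)
  <= 2 * cL * (G / (2 * L') + (1 - al) * ga / 2 * U + al * ga / 2 * W).
Proof.
move=> /andP[p00 p01] /andP[pj0 pj1] L0 hT eQt eQf h1 h2 h3.
have -> : 2 * cL * (G / (2 * L') + (1 - al) * ga / 2 * U + al * ga / 2 * W)
  = cL * (al * ga * W) + cL * ((1 - al) * ga * U) + cL * (G / L').
  field; rewrite gt_eqF //.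
have -> : p0' * (pj * T1 + (1 - pj) * T1) = p0' * T1 by ring.
have hT' : p0' * T1 <= p0' * (2 * (AA ^+ 2 * W) + 2 * (BB ^+ 2 * U)).
  by rewrite ler_pM2l.
rewrite eQt eQf.
have e1 : p0' * (2 * (AA ^+ 2 * W) + 2 * (BB ^+ 2 * U))
   = p0' * (2 * AA ^+ 2 * W) + p0' * (2 * BB ^+ 2 * U) by ring.
rewrite e1 in hT'.
set X1 := p0' * (2 * AA ^+ 2 * W) in h1 hT'.
set X2 := p0' * (2 * BB ^+ 2 * U) in h2 hT'.
set X3 := (1 - p0') * (pj * (EE ^+ 2 * U)) in h2 *.
set X4 := (1 - p0') * ((1 - pj) * (SS ^+ 2 * G)) in h3.
have -> : (1 - p0') * (pj * (EE ^+ 2 * U) + (1 - pj) * (SS ^+ 2 * G)) = X3 + X4 by rewrite /X3 /X4; ring.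
lra.
Qed.

Lemma max3 (a b e : R) : [/\ a <= Num.max (Num.max a b) e, b <= Num.max (Num.max a b) e
   & e <= Num.max (Num.max a b) e].
Proof. by split; rewrite !le_max !lexx ?orbT. Qed.

End M1.

Section M2.
Variables (R : realType) (n k d : nat) (c : 'I_n -> 'I_k) (gamma : 'I_n -> R) (alpha : 'I_k -> R).

Lemma cm_lin (A B : 'I_n -> 'rV[R]_d) (t : R) j :
  cluster_mean c gamma (fun i => A i + t *: B i) j
  = cluster_mean c gamma A j + t *: cluster_mean c gamma B j.
Proof.
rewrite /cluster_mean.
have -> : \sum_(i < n | c i == j) gamma i *: (A i + t *: B i)
   = \sum_(i < n | c i == j) gamma i *: A i + t *: \sum_(i < n | c i == j) gamma i *: B i.
  rewrite scaler_sumr -big_split; apply: eq_bigr => i _; rewrite scalerDr.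
  by congr (_ + _); rewrite !scalerA mulrC.
by rewrite scalerDr; congr (_ + _); rewrite !scalerA mulrC.
Qed.

Lemma gm_lin (A B : 'I_n -> 'rV[R]_d) (t : R) :
  global_mean c gamma alpha (fun i => A i + t *: B i)
  = global_mean c gamma alpha A + t *: global_mean c gamma alpha B.
Proof.
rewrite /global_mean.
have -> : \sum_(i < n) (alpha (c i) * gamma i) *: (A i + t *: B i)
   = \sum_(i < n) (alpha (c i) * gamma i) *: A i + t *: \sum_(i < n) (alpha (c i) * gamma i) *: B i.
  rewrite scaler_sumr -big_split; apply: eq_bigr => i _; rewrite scalerDr.
  by congr (_ + _); rewrite !scalerA mulrC.
by rewrite scalerDr; congr (_ + _); rewrite !scalerA mulrC.
Qed.

Lemma cm_sub (A B : 'I_n -> 'rV[R]_d) j :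
  cluster_mean c gamma (fun i => A i - B i) j
  = cluster_mean c gamma A j - cluster_mean c gamma B j.
Proof.
have -> : (fun i => A i - B i) = (fun i => A i + (-1) *: B i).
  by apply/funext => i; rewrite scaleN1r.
by rewrite cm_lin scaleN1r.
Qed.

Lemma gm_sub (A B : 'I_n -> 'rV[R]_d) :
  global_mean c gamma alpha (fun i => A i - B i)
  = global_mean c gamma alpha A - global_mean c gamma alpha B.
Proof.
have -> : (fun i => A i - B i) = (fun i => A i + (-1) *: B i).
  by apply/funext => i; rewrite scaleN1r.
by rewrite gm_lin scaleN1r.
Qed.

Variables (f : 'I_n -> 'rV[R]_d -> R) (L : R) (Th Thhat : 'I_n -> 'rV[R]_d).

Definition a1 i := Thhat i - cluster_mean c gamma Thhat (c i).
Definition u i := (Th i - cluster_mean c gamma Th (c i)) - (Thhat i - cluster_mean c gamma Thhat (c i)).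
Definition a2 i := Thhat i - global_mean c gamma alpha Thhat.
Definition w i := (Th i - global_mean c gamma alpha Th) - (Thhat i - global_mean c gamma alpha Thhat).
Definition dl i := Th i - Thhat i.
Definition Tht (t : R) i := Thhat i + t *: dl i.
Definition c1 i := (1 - alpha (c i)) * gamma i / 2.
Definition c2 i := alpha (c i) * gamma i / 2.
Definition Si i := dot (grad (f i) (Thhat i)) (dl i) + c1 i * (2 * dot (a1 i) (u i))
   + c2 i * (2 * dot (a2 i) (w i)).
Definition Ci i := L / 2 * sqnorm (dl i) + c1 i * sqnorm (u i) + c2 i * sqnorm (w i).

Lemma Tht_cm t i : Tht t i - cluster_mean c gamma (Tht t) (c i) = a1 i + t *: u i.
Proof.
rewrite /Tht cm_lin /dl cm_sub /a1 /u.
by apply/rowP => m; rewrite !mxE; ring.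
Qed.

Lemma Tht_gm t i : Tht t i - global_mean c gamma alpha (Tht t) = a2 i + t *: w i.
Proof.
rewrite /Tht gm_lin /dl gm_sub /a2 /w.
by apply/rowP => m; rewrite !mxE; ring.
Qed.

Lemma Th_cm i : Th i - cluster_mean c gamma Th (c i) = a1 i + u i.
Proof. by rewrite /u /a1 [RHS]addrC subrK. Qed.

Lemma Th_gm i : Th i - global_mean c gamma alpha Th = a2 i + w i.
Proof. by rewrite /w /a2 [RHS]addrC subrK. Qed.

Lemma objF_expand (Th' A1 A2 : 'I_n -> 'rV[R]_d) :
  (forall i, Th' i - cluster_mean c gamma Th' (c i) = A1 i) ->
  (forall i, Th' i - global_mean c gamma alpha Th' = A2 i) ->
  objF c gamma alpha f Th' =
  \sum_(i < n) (f i (Th' i) + c1 i * sqnorm (A1 i) + c2 i * sqnorm (A2 i)).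
Proof. by move=> h1 h2; rewrite /objF; apply: eq_bigr => i _; rewrite h1 h2. Qed.

Lemma arith_step (fT fH c1 c2 sa1 sa2 su sw da dw dg sdl t LL : R) :
  fT <= fH + t * dg + LL / 2 * (t ^+ 2 * sdl) ->
  fT + c1 * (sa1 + 2 * (t * da) + t ^+ 2 * su) + c2 * (sa2 + 2 * (t * dw) + t ^+ 2 * sw)
  <= (fH + c1 * sa1 + c2 * sa2) + t * (dg + c1 * (2 * da) + c2 * (2 * dw))
     + t ^+ 2 * (LL / 2 * sdl + c1 * su + c2 * sw).
Proof.
move=> h; rewrite -subr_ge0.
have -> : (fH + c1 * sa1 + c2 * sa2) + t * (dg + c1 * (2 * da) + c2 * (2 * dw))
     + t ^+ 2 * (LL / 2 * sdl + c1 * su + c2 * sw) -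
    (fT + c1 * (sa1 + 2 * (t * da) + t ^+ 2 * su) + c2 * (sa2 + 2 * (t * dw) + t ^+ 2 * sw))
    = (fH + t * dg + LL / 2 * (t ^+ 2 * sdl)) - fT by ring.
by rewrite subr_ge0.
Qed.

Lemma step_t t i : 0 <= L -> smooth L (f i) ->
  f i (Tht t i) + c1 i * sqnorm (a1 i + t *: u i) + c2 i * sqnorm (a2 i + t *: w i)
  <= (f i (Thhat i) + c1 i * sqnorm (a1 i) + c2 i * sqnorm (a2 i)) + t * Si i + t ^+ 2 * Ci i.
Proof.
move=> L0 sm.
have hd := descent (f i) L (Thhat i) (Tht t i) L0 sm.
have e : Tht t i - Thhat i = t *: dl i by rewrite /Tht addrAC subrr add0r.
rewrite e (diff_dot (f i) (Thhat i) (t *: dl i)) dotZr sqnormZ in hd.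
rewrite (sqnormD (a1 i) (t *: u i)) (sqnormD (a2 i) (t *: w i)) !dotZr !sqnormZ.
exact: arith_step hd.
Qed.

Lemma arith_F (G2 fT fH c1 c2 sa1 sa2 su sw da dw dg : R) :
  G2 <= fT - fH - dg ->
  G2 + c1 * su + c2 * sw <=
  (fT + c1 * (sa1 + 2 * da + su) + c2 * (sa2 + 2 * dw + sw))
  - (fH + c1 * sa1 + c2 * sa2) - (dg + c1 * (2 * da) + c2 * (2 * dw)).
Proof.
move=> h; rewrite -subr_ge0.
have -> : (fT + c1 * (sa1 + 2 * da + su) + c2 * (sa2 + 2 * dw + sw))
  - (fH + c1 * sa1 + c2 * sa2) - (dg + c1 * (2 * da) + c2 * (2 * dw))
  - (G2 + c1 * su + c2 * sw) = (fT - fH - dg) - G2 by ring.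
by rewrite subr_ge0.
Qed.

Lemma step_F (mu : R) i : 0 <= mu -> 0 < L -> strongly_convex mu (f i) -> smooth L (f i) ->
  sqnorm (grad (f i) (Th i) - grad (f i) (Thhat i)) / (2 * L)
    + c1 i * sqnorm (u i) + c2 i * sqnorm (w i)
  <= (f i (Th i) + c1 i * sqnorm (a1 i + u i) + c2 i * sqnorm (a2 i + w i))
     - (f i (Thhat i) + c1 i * sqnorm (a1 i) + c2 i * sqnorm (a2 i)) - Si i.
Proof.
move=> mu0 L0 cvx sm.
have h := cocoercive (f i) mu L (Thhat i) (Th i) mu0 L0 cvx sm.
rewrite (diff_dot (f i) (Thhat i) (Th i - Thhat i)) in h.
rewrite (sqnormD (a1 i) (u i)) (sqnormD (a2 i) (w i)).
exact: arith_F h.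
Qed.

End M2.

Section M3.
Variables (R : realType) (n k d : nat) (c : 'I_n -> 'I_k) (gamma : 'I_n -> R) (alpha : 'I_k -> R).
Variables (f : 'I_n -> 'rV[R]_d -> R) (L : R) (p0 : R) (p tau : 'I_k -> R).

Definition oraB (xi0 b : bool) (Th : 'I_n -> 'rV[R]_d) (i : 'I_n) : 'rV[R]_d :=
  let j := c i in
  if xi0 then
    (gamma i * alpha j / p0) *: (Th i - global_mean c gamma alpha Th)
    + (gamma i * tau j * (1 - alpha j) / p0) *: (Th i - cluster_mean c gamma Th j)
  else if b then
    (gamma i * (1 - tau j) * (1 - alpha j) / ((1 - p0) * p j)) *: (Th i - cluster_mean c gamma Th j)
  else
    ((1 - p0) * (1 - p j))^-1 *: grad (f i) (Th i).

Lemma oracleE xi0 xis Th i :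
  oracle c gamma alpha p0 p tau f xi0 xis Th i = oraB xi0 (xis (c i)) Th i.
Proof. by []. Qed.

Lemma exp_part (Th Thhat : 'I_n -> 'rV[R]_d) (b : bool) :
  \sum_(xis : {ffun 'I_k -> bool}) xi_prob p0 p b xis *
     \sum_(i < n) sqnorm (oracle c gamma alpha p0 p tau f b xis Th i
                          - oracle c gamma alpha p0 p tau f b xis Thhat i)
  = (if b then p0 else 1 - p0) *
    \sum_(i < n) (p (c i) * sqnorm (oraB b true Th i - oraB b true Thhat i)
                  + (1 - p (c i)) * sqnorm (oraB b false Th i - oraB b false Thhat i)).
Proof.
rewrite /xi_prob.
under eq_bigr do rewrite mulr_sumr.
rewrite exchange_big /= mulr_sumr; apply: eq_bigr => i _.
under eq_bigr do rewrite !oracleE -mulrA.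
rewrite -mulr_sumr; congr (_ * _).
have hw : forall j : 'I_k, (fun j (b : bool) => if b then p j else 1 - p j) j true
   + (fun j (b : bool) => if b then p j else 1 - p j) j false = 1.
  by move=> j /=; rewrite addrC subrK.
have M := @marg R k (fun j (b : bool) => if b then p j else 1 - p j) hw (c i) (fun b' => sqnorm (oraB b b' Th i - oraB b b' Thhat i)).
simpl in M; exact: M.
Qed.


Variables (Th Thhat : 'I_n -> 'rV[R]_d).
Local Notation uu := (@u R n k d c gamma Th Thhat).
Local Notation ww := (@w R n k d c gamma alpha Th Thhat).
Local Notation cc1 := (@c1 R n k c gamma alpha).
Local Notation cc2 := (@c2 R n k c gamma alpha).

Lemma per_i i :
  0 < p0 < 1 -> (forall j, 0 < p j < 1) ->
  (forall j, tau j = p0 / (p0 + 2 * (1 - p0) * p j)) ->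
  (forall j, 0 <= alpha j <= 1) -> (forall i, 0 < gamma i) -> 0 < L ->
  p0 * (p (c i) * sqnorm (oraB true true Th i - oraB true true Thhat i)
        + (1 - p (c i)) * sqnorm (oraB true false Th i - oraB true false Thhat i))
  + (1 - p0) * (p (c i) * sqnorm (oraB false true Th i - oraB false true Thhat i)
        + (1 - p (c i)) * sqnorm (oraB false false Th i - oraB false false Thhat i))
  <= 2 * calL c gamma alpha p0 p L *
     (sqnorm (grad (f i) (Th i) - grad (f i) (Thhat i)) / (2 * L)
      + cc1 i * sqnorm (uu i)
      + cc2 i * sqnorm (ww i)).
Proof.
move=> hp0 hp htau hal hga L0.
set j := c i.
have [M1 M2 M3] := @max3 R (2 / p0 * \big[Num.max/0]_(i < n) (alpha (c i) * gamma i))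
    (\big[Num.max/0]_(j < k)
        (2 * (1 - alpha j) * \big[Num.max/0]_(i < n | c i == j) gamma i
          / (p0 + 2 * (1 - p0) * p j)))
    (L / (1 - p0) * \big[Num.max/0]_(j < k) (1 - p j)^-1).
rewrite -/(calL c gamma alpha p0 p L) in M1 M2 M3.
set cL := calL c gamma alpha p0 p L in M1 M2 M3 *.
have hT : sqnorm (oraB true true Th i - oraB true true Thhat i)
    = sqnorm (oraB true false Th i - oraB true false Thhat i) by [].
rewrite hT.
apply: (@comb_ineq R p0 (p j) _ _ _ (gamma i * alpha j / p0) (gamma i * tau j * (1 - alpha j) / p0)
   (gamma i * (1 - tau j) * (1 - alpha j) / ((1 - p0) * p j))
   (((1 - p0) * (1 - p j))^-1) cL _ _ _ L (gamma i) (alpha j)) => //.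
- have -> : oraB true false Th i - oraB true false Thhat i
     = (gamma i * alpha j / p0) *: ww i
       + (gamma i * tau j * (1 - alpha j) / p0) *: uu i.
    by rewrite /oraB /w /u; apply/rowP => m; rewrite !mxE; ring.
  by apply: le_trans (sqnormD_le _ _) _; rewrite !sqnormZ.
- rewrite /oraB /= -/j -scalerBr sqnormZ; congr (_ * _).
- by rewrite /oraB /= -/j -scalerBr sqnormZ.
- have := @ineq_c1 R p0 (alpha j * gamma i) (\big[Num.max/0]_(i < n) (alpha (c i) * gamma i)) cL
     (sqnorm (ww i)).
  rewrite (mulrC (alpha j)); apply.
  + by case/andP: hp0.
  + have /andP[a0 _] := hal j; by rewrite mulr_ge0 // ltW.
  + by rewrite mulrC; exact: (le_bigmax 0 (fun i => alpha (c i) * gamma i) i).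
  + exact: M1.
  + exact: sqnorm_ge0.
- apply: (@ineq_c2 R p0 (p j) (gamma i) (alpha j)
     (\big[Num.max/0]_(i0 < n | c i0 == j) gamma i0)) => //.
  + exact: (@le_bigmax_cond _ _ _ 0 i (fun i0 => c i0 == j) gamma (eqxx _)).
  + apply: le_trans M2.
    exact: (le_bigmax 0 (fun j => 2 * (1 - alpha j) * \big[Num.max/0]_(i < n | c i == j) gamma i
          / (p0 + 2 * (1 - p0) * p j)) j).
  + exact: sqnorm_ge0.
- apply: (@ineq_c3 R p0 (p j) L (\big[Num.max/0]_(j < k) (1 - p j)^-1)) => //.
  + exact: (le_bigmax 0 (fun j => (1 - p j)^-1) j).
  + exact: sqnorm_ge0.
Qed.

End M3.

Section M4.
Variables (R : realType) (n k d : nat) (c : 'I_n -> 'I_k) (gamma : 'I_n -> R) (alpha : 'I_k -> R).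
Variables (f : 'I_n -> 'rV[R]_d -> R) (mu L : R) (p0 : R) (p tau : 'I_k -> R).
Variables (Th Thhat : 'I_n -> 'rV[R]_d).
Local Notation uu := (@u R n k d c gamma Th Thhat).
Local Notation ww := (@w R n k d c gamma alpha Th Thhat).
Local Notation A1 := (@a1 R n k d c gamma Thhat).
Local Notation A2 := (@a2 R n k d c gamma alpha Thhat).
Local Notation cc1 := (@c1 R n k c gamma alpha).
Local Notation cc2 := (@c2 R n k c gamma alpha).
Local Notation SI := (@Si R n k d c gamma alpha f Th Thhat).
Local Notation CI := (@Ci R n k d c gamma alpha L Th Thhat).
Local Notation TH := (@Tht R n d Th Thhat).
Local Notation DL := (@dl R n d Th Thhat).

Hypotheses (mu0 : 0 < mu) (muL : mu <= L)
  (hcvx : forall i, strongly_convex mu (f i)) (hsm : forall i, smooth L (f i))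
  (hga : forall i, 0 < gamma i) (hal : forall j, 0 <= alpha j <= 1)
  (hp0 : 0 < p0 < 1) (hp : forall j, 0 < p j < 1)
  (htau : forall j, tau j = p0 / (p0 + 2 * (1 - p0) * p j))
  (hmin : forall Th, objF c gamma alpha f Thhat <= objF c gamma alpha f Th).

Lemma L0 : 0 < L. Proof. exact: lt_le_trans mu0 muL. Qed.

Lemma c1_ge0 i : 0 <= cc1 i.
Proof.
rewrite /c1; have /andP[_ a1'] := hal (c i).
by rewrite divr_ge0 // mulr_ge0 ?subr_ge0 // ltW.
Qed.

Lemma c2_ge0 i : 0 <= cc2 i.
Proof.
rewrite /c2; have /andP[a0 _] := hal (c i).
by rewrite divr_ge0 // mulr_ge0 // ltW.
Qed.

Lemma S_ge0 : 0 <= \sum_(i < n) SI i.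
Proof.
apply: (@pos_lin R _ (\sum_(i < n) CI i)).
  apply: sumr_ge0 => i _; rewrite /Ci.
  have := c1_ge0 i; have := c2_ge0 i; have := L0.
  move=> h1 h2 h3.
  by rewrite !addr_ge0 // mulr_ge0 // ?sqnorm_ge0 // divr_ge0 // ltW.
move=> t t0.
have H := hmin (TH t).
rewrite (@objF_expand R n k d c gamma alpha f Thhat A1 A2) // in H.
rewrite (@objF_expand R n k d c gamma alpha f (TH t) (fun i => A1 i + t *: uu i)
           (fun i => A2 i + t *: ww i)) in H; last first.
  - by move=> i; exact: Tht_gm.
  - by move=> i; exact: Tht_cm.
have hs : \sum_(i < n) (f i (TH t i) + cc1 i * sqnorm (A1 i + t *: uu i)
                         + cc2 i * sqnorm (A2 i + t *: ww i))
   <= \sum_(i < n) ((f i (Thhat i) + cc1 i * sqnorm (A1 i) + cc2 i * sqnorm (A2 i))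
                    + t * SI i + t ^+ 2 * CI i).
  apply: ler_sum => i _; exact: step_t (ltW L0) (hsm i).
rewrite [in X in _ <= X]big_split [in X in _ <= X]big_split /= -!mulr_sumr in hs.
have := le_trans H hs; rewrite -addrA lerDl; exact.
Qed.


Lemma F_bound :
  \sum_(i < n) (sqnorm (grad (f i) (Th i) - grad (f i) (Thhat i)) / (2 * L)
                + cc1 i * sqnorm (uu i) + cc2 i * sqnorm (ww i))
  <= objF c gamma alpha f Th - objF c gamma alpha f Thhat.
Proof.
rewrite (@objF_expand R n k d c gamma alpha f Th (fun i => A1 i + uu i)
           (fun i => A2 i + ww i)); last first.
  - by move=> i; exact: Th_gm.
  - by move=> i; exact: Th_cm.
rewrite (@objF_expand R n k d c gamma alpha f Thhat A1 A2) //.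
have h : \sum_(i < n) (sqnorm (grad (f i) (Th i) - grad (f i) (Thhat i)) / (2 * L)
                + cc1 i * sqnorm (uu i) + cc2 i * sqnorm (ww i))
  <= \sum_(i < n) ((f i (Th i) + cc1 i * sqnorm (A1 i + uu i) + cc2 i * sqnorm (A2 i + ww i))
     - (f i (Thhat i) + cc1 i * sqnorm (A1 i) + cc2 i * sqnorm (A2 i)) - SI i).
  by apply: ler_sum => i _; exact: step_F (ltW mu0) L0 (hcvx i) (hsm i).
apply: (le_trans h); rewrite !sumrB.
by rewrite lerBlDr lerDl S_ge0.
Qed.

Lemma cL_ge0 : 0 <= calL c gamma alpha p0 p L.
Proof.
have [_ _ M3] := @max3 R (2 / p0 * \big[Num.max/0]_(i < n) (alpha (c i) * gamma i))
    (\big[Num.max/0]_(j < k)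
        (2 * (1 - alpha j) * \big[Num.max/0]_(i < n | c i == j) gamma i
          / (p0 + 2 * (1 - p0) * p j)))
    (L / (1 - p0) * \big[Num.max/0]_(j < k) (1 - p j)^-1).
apply: le_trans M3.
have /andP[_ p01] := hp0.
apply: mulr_ge0; first by rewrite divr_ge0 ?subr_ge0 // ltW // L0.
apply: (big_ind (fun x => 0 <= x)) => //.
  by move=> x y hx hy; rewrite le_max hx.
move=> j _; have /andP[_ pj1] := hp j.
by rewrite invr_ge0 subr_ge0 ltW.
Qed.

Lemma main_sec :
  expected_sqdiff c gamma alpha p0 p tau f Th Thhat
      <= 2 * calL c gamma alpha p0 p L *
           (objF c gamma alpha f Th - objF c gamma alpha f Thhat).
Proof.
rewrite /expected_sqdiff big_bool.
rewrite (@exp_part R n k d c gamma alpha f p0 p tau Th Thhat true).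
rewrite (@exp_part R n k d c gamma alpha f p0 p tau Th Thhat false) /=.
rewrite !mulr_sumr -big_split /=.
apply: le_trans (_ : \sum_(i < n) (2 * calL c gamma alpha p0 p L *
     (sqnorm (grad (f i) (Th i) - grad (f i) (Thhat i)) / (2 * L)
                + cc1 i * sqnorm (uu i) + cc2 i * sqnorm (ww i))) <= _).
  apply: ler_sum => i _.
  exact: (@per_i R n k d c gamma alpha f L p0 p tau Th Thhat i hp0 hp htau hal hga L0).
rewrite -mulr_sumr; apply: ler_wpM2l; last exact: F_bound.
by rewrite mulr_ge0 // cL_ge0.
Qed.

End M4.

Theorem mainTheorem6 (R : realType) (n k d : nat) (c : 'I_n -> 'I_k)
    (f : 'I_n -> 'rV[R]_d -> R) (mu L : R) (gamma : 'I_n -> R) (alpha : 'I_k -> R)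
    (p0 : R) (p tau : 'I_k -> R) (Thhat : 'I_n -> 'rV[R]_d) :
  (0 < d)%N ->
  (forall j : 'I_k, exists i : 'I_n, c i = j) ->
  0 < mu -> mu <= L ->
  (forall i, strongly_convex mu (f i)) ->
  (forall i, smooth L (f i)) ->
  (forall i, 0 < gamma i) ->
  (forall j, 0 <= alpha j <= 1) ->
  (exists j, alpha j != 0) ->
  0 < p0 < 1 ->
  (forall j, 0 < p j < 1) ->
  (forall j, tau j = p0 / (p0 + 2 * (1 - p0) * p j)) ->
  (forall Th, objF c gamma alpha f Thhat <= objF c gamma alpha f Th) ->
  forall Th : 'I_n -> 'rV[R]_d,
    expected_sqdiff c gamma alpha p0 p tau f Th Thhat
      <= 2 * calL c gamma alpha p0 p L *
           (objF c gamma alpha f Th - objF c gamma alpha f Thhat).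

Proof.
move=> _ _ mu0 muL hcvx hsm hga hal _ hp0 hp htau hmin Th.
exact: (@main_sec R n k d c gamma alpha f mu L p0 p tau Th Thhat mu0 muL hcvx hsm hga hal hp0 hp htau hmin).
Qed.
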